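(* Assume $\{\beta\in\mathbb{R}^p: A\beta\le b,\ \Gamma\beta=d\}\neq\emptyset$. Run the generalized SMO algorithm with $\tau=0$ from some $\theta^0\in\mathcal F$ and suppose it never stops ($\Delta^k>0$ for all $k$). Let $K\subseteq\mathbb{N}$ be an infinite set of iterations at which the update is not clipped. Then $\Delta^k\to0$ as $k\to\infty$ with $k\in K$; in particular each of $\Delta_1,\Delta_2,\Delta_3,\Delta_4$ computed at $\theta^k$ tends to $0$ along $K$.
   Context: Setup. Let $n,p,k_1,k_2\ge1$, $X\in\mathbb{R}^{n\times p}$ with rows $X_{i:}$, $y\in\mathbb{R}^n$, $C>0$, $\nu\in(0,1]$, $A\in\mathbb{R}^{k_1\times p}$, $b\in\mathbb{R}^{k_1}$, $\Gamma\in\mathbb{R}^{k_2\times p}$, $d\in\mathbb{R}^{k_2}$; $\mathbf e$ is the all-ones vector and $Q=XX^T\in\mathbb{R}^{n\times n}$. Dual variables are $\theta=(\alpha,\alpha^*,\gamma,\mu)\in\mathbb{R}^n\times\mathbb{R}^n\times\mathbb{R}^{k_1}\times\mathbb{R}^{k_2}$. Let $M$ be the $(2n+k_1+k_2)\times p$ matrix with row blocks $X,-X,A,-\Gamma$, $\bar Q=MM^T$, $l=(y,-y,b,-d)$, and $f(\theta)=\frac12\theta^T\bar Q\theta+l^T\theta$. The feasible set $\mathcal F$ consists of $\theta$ with $0\le\alpha_i,\alpha_i^*\le C/n$ for all $i$, $\mathbf e^T(\alpha+\alpha^* )\le C\nu$, $\mathbf e^T(\alpha-\alpha^* )=0$,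 $\gamma_j\ge0$ for all $j$. Generalized SMO algorithm. Assume the rows of $X$ are pairwise distinct and no row of $A$ or $\Gamma$ is zero. Let $I_{up}(\alpha)=\{i:\alpha_i<C/n\}$, $I_{low}(\alpha)=\{i:\alpha_i>0\}$, and $I^*_{up},I^*_{low}$ the same sets for $\alpha^*$. Fix $\tau\ge0$ and $\theta^0\in\mathcal F$. At iteration $k$, with all gradients evaluated at $\theta^k$: pick $i\in\arg\min_{I_{up}(\alpha^k)}\nabla_{\alpha_i}f$, $j\in\arg\max_{I_{low}(\alpha^k)}\nabla_{\alpha_j}f$ and set $\Delta_1=\max(\nabla_{\alpha_j}f-\nabla_{\alpha_i}f,0)$ ($\Delta_1=0$ if either set is empty); define $i^*,j^*,\Delta_2$ identically for $\alpha^*$; $\Delta_3=\max(-\min_{s}\nabla_{\gamma_s}f,0)$; $\Delta_4=\max_s|\nabla_{\mu_s}f|$; $\Delta^k=\max(\Delta_1,\Delta_2,\Delta_3,\Delta_4)$. If $\Delta^k\le\tau$ stop; otherwise update the first block (in the order $\alpha,\alpha^*,\gamma,\mu$) whose $\Delta_m$ equals $\Delta^k$, leaving all other coordinates unchanged: Block $\alpha$: $t_q=-\frac{\nabla_{\alpha_i}f-\nabla_{\alpha_j}f}{Q_{ii}+Q_{jj}-2Q_{ij}}$, $I_1=\max(-\alpha_i^k,\alpha_j^k-C/n)$, $I_2=\min(\alpha_j^k,C/n-\alpha_i^k)$, $t^*=\min(\max(I_1,t_q),I_2)$, $\alpha_i^{k+1}=\alpha_i^k+t^*$, $\alpha_j^{k+1}=\alpha_j^k-t^*$.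 Block $\alpha^*$: the same formulas with $\alpha^*$, $(i^*,j^* )$, $\nabla_{\alpha^*}f$ and the same matrix $Q$. Block $\gamma$: $u\in\arg\min_s\nabla_{\gamma_s}f$, $\gamma_u^{k+1}=\max\big(\gamma_u^k-\nabla_{\gamma_u}f/(AA^T)_{uu},0\big)$. Block $\mu$: $u\in\arg\max_s|\nabla_{\mu_s}f|$, $\mu_u^{k+1}=\mu_u^k-\nabla_{\mu_u}f/(\Gamma\Gamma^T)_{uu}$. Clipping. An update in block $\alpha$ or $\alpha^*$ is called clipped if $t^*\neq t_q$; an update in block $\gamma$ is clipped if $\gamma_u^k-\nabla_{\gamma_u}f(\theta^k)/(AA^T)_{uu}<0$; updates in block $\mu$ are never clipped. *)

(* Defs.v *)
(* classical reals.  Vectors/matrices are functions on nat,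
   only the entries below the relevant dimension are ever used. *)
From Stdlib Require Import Reals Lra List Arith.
Open Scope R_scope.

Record prob := Prob {
  pn : nat; pp : nat; pk1 : nat; pk2 : nat;
  pX : nat -> nat -> R;   (* n x p *)
  py : nat -> R;
  pC : R; pnu : R;
  pA : nat -> nat -> R;   (* k1 x p *)
  pb : nat -> R;
  pG : nat -> nat -> R;   (* Gamma, k2 x p *)
  pd : nat -> R
}.

Record theta := Theta {
  al : nat -> R; als : nat -> R; ga : nat -> R; mu : nat -> R
}.

Fixpoint sumR (m : nat) (f : nat -> R) : R :=
  match m with O => 0 | S m' => sumR m' f + f m' end.

Definition Cn (P : prob) : R := pC P / INR (pn P).

(* w = M^T theta, a vector of R^p  (M has row blocks X, -X, A, -Gamma) *)
Definition wvec (P : prob) (th : theta) (c : nat) : R :=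
  sumR (pn P) (fun i => pX P i c * al th i)
  - sumR (pn P) (fun i => pX P i c * als th i)
  + sumR (pk1 P) (fun s => pA P s c * ga th s)
  - sumR (pk2 P) (fun s => pG P s c * mu th s).

(* gradient of f = Qbar theta + l = M (M^T theta) + l, blockwise,
   with l = (y, -y, b, -d) *)
Definition grad_al (P : prob) (th : theta) (i : nat) : R :=
  sumR (pp P) (fun c => pX P i c * wvec P th c) + py P i.
Definition grad_als (P : prob) (th : theta) (i : nat) : R :=
  - sumR (pp P) (fun c => pX P i c * wvec P th c) - py P i.
Definition grad_ga (P : prob) (th : theta) (s : nat) : R :=
  sumR (pp P) (fun c => pA P s c * wvec P th c) + pb P s.
Definition grad_mu (P : prob) (th : theta) (s : nat) : R :=
  - sumR (pp P) (fun c => pG P s c * wvec P th c) - pd P s.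

Definition Qm (P : prob) (i j : nat) : R := sumR (pp P) (fun c => pX P i c * pX P j c).
Definition AAt (P : prob) (s t : nat) : R := sumR (pp P) (fun c => pA P s c * pA P t c).
Definition GGt (P : prob) (s t : nat) : R := sumR (pp P) (fun c => pG P s c * pG P t c).

Definition feasible (P : prob) (th : theta) : Prop :=
  (forall i, (i < pn P)%nat ->
     0 <= al th i <= Cn P /\ 0 <= als th i <= Cn P) /\
  sumR (pn P) (fun i => al th i + als th i) <= pC P * pnu P /\
  sumR (pn P) (fun i => al th i - als th i) = 0 /\
  (forall s, (s < pk1 P)%nat -> 0 <= ga th s).

Fixpoint lmin (l : list R) : option R :=
  match l with
  | nil => None
  | x :: r => match lmin r with None => Some x | Some m => Some (Rmin x m) end
  end.
Fixpoint lmax (l : list R) : option R :=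
  match l with
  | nil => None
  | x :: r => match lmax r with None => Some x | Some m => Some (Rmax x m) end
  end.

Definition Rltb (x y : R) : bool := if Rlt_dec x y then true else false.

Definition I_up (P : prob) (a : nat -> R) : list nat :=
  filter (fun i => Rltb (a i) (Cn P)) (seq 0 (pn P)).
Definition I_low (P : prob) (a : nat -> R) : list nat :=
  filter (fun i => Rltb 0 (a i)) (seq 0 (pn P)).

Definition Delta_pair (P : prob) (a g : nat -> R) : R :=
  match lmin (map g (I_up P a)), lmax (map g (I_low P a)) with
  | Some m, Some M => Rmax (M - m) 0
  | _, _ => 0
  end.

Definition Delta1 (P : prob) (th : theta) : R := Delta_pair P (al th) (grad_al P th).
Definition Delta2 (P : prob) (th : theta) : R := Delta_pair P (als th) (grad_als P th).
Definition Delta3 (P : prob) (th : theta) : R :=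
  match lmin (map (grad_ga P th) (seq 0 (pk1 P))) with
  | Some m => Rmax (- m) 0 | None => 0 end.
Definition Delta4 (P : prob) (th : theta) : R :=
  match lmax (map (fun s => Rabs (grad_mu P th s)) (seq 0 (pk2 P))) with
  | Some M => M | None => 0 end.
Definition DeltaK (P : prob) (th : theta) : R :=
  Rmax (Rmax (Delta1 P th) (Delta2 P th)) (Rmax (Delta3 P th) (Delta4 P th)).

Definition is_argmin_up (P : prob) (a g : nat -> R) (i : nat) : Prop :=
  (i < pn P)%nat /\ a i < Cn P /\
  forall i', (i' < pn P)%nat -> a i' < Cn P -> g i <= g i'.
Definition is_argmax_low (P : prob) (a g : nat -> R) (j : nat) : Prop :=
  (j < pn P)%nat /\ 0 < a j /\
  forall j', (j' < pn P)%nat -> 0 < a j' -> g j' <= g j.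

Definition tq (P : prob) (g : nat -> R) (i j : nat) : R :=
  - (g i - g j) / (Qm P i i + Qm P j j - 2 * Qm P i j).
Definition tstar (P : prob) (a g : nat -> R) (i j : nat) : R :=
  Rmin (Rmax (Rmax (- a i) (a j - Cn P)) (tq P g i j))
       (Rmin (a j) (Cn P - a i)).
Definition pair_upd (a : nat -> R) (i j : nat) (t : R) : nat -> R :=
  fun s => if Nat.eqb s i then a i + t else if Nat.eqb s j then a j - t else a s.
Definition upd1 (a : nat -> R) (u : nat) (v : R) : nat -> R :=
  fun s => if Nat.eqb s u then v else a s.

(* The index choices among argmin/argmax ties are arbitrary. *)
Definition smo_iter (P : prob) (tau : R) (th th' : theta) (clipped : bool) : Prop :=
  tau < DeltaK P th /\
  (
    (Delta1 P th = DeltaK P th /\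
     exists i j,
       is_argmin_up P (al th) (grad_al P th) i /\
       is_argmax_low P (al th) (grad_al P th) j /\
       th' = Theta (pair_upd (al th) i j (tstar P (al th) (grad_al P th) i j))
                   (als th) (ga th) (mu th) /\
       (clipped = true <-> tstar P (al th) (grad_al P th) i j <> tq P (grad_al P th) i j))
  \/
    (Delta1 P th <> DeltaK P th /\ Delta2 P th = DeltaK P th /\
     exists i j,
       is_argmin_up P (als th) (grad_als P th) i /\
       is_argmax_low P (als th) (grad_als P th) j /\
       th' = Theta (al th)
                   (pair_upd (als th) i j (tstar P (als th) (grad_als P th) i j))
                   (ga th) (mu th) /\
       (clipped = true <-> tstar P (als th) (grad_als P th) i j <> tq P (grad_als P th) i j))
  \/
    (Delta1 P th <> DeltaK P th /\ Delta2 P th <> DeltaK P th /\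
     Delta3 P th = DeltaK P th /\
     exists u, (u < pk1 P)%nat /\
       (forall s, (s < pk1 P)%nat -> grad_ga P th u <= grad_ga P th s) /\
       th' = Theta (al th) (als th)
               (upd1 (ga th) u (Rmax (ga th u - grad_ga P th u / AAt P u u) 0))
               (mu th) /\
       (clipped = true <-> ga th u - grad_ga P th u / AAt P u u < 0))
  \/
    (Delta1 P th <> DeltaK P th /\ Delta2 P th <> DeltaK P th /\
     Delta3 P th <> DeltaK P th /\ Delta4 P th = DeltaK P th /\
     exists u, (u < pk2 P)%nat /\
       (forall s, (s < pk2 P)%nat -> Rabs (grad_mu P th s) <= Rabs (grad_mu P th u)) /\
       th' = Theta (al th) (als th) (ga th)
               (upd1 (mu th) u (mu th u - grad_mu P th u / GGt P u u)) /\
       clipped = false) ).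

Definition conv0_along (K : nat -> Prop) (u : nat -> R) : Prop :=
  forall eps, 0 < eps -> exists N, forall k, (N <= k)%nat -> K k -> Rabs (u k) < eps.

(* Main.v *)
Require Import Defs.
From Stdlib Require Import Reals Lra Lia List Arith Classical FunctionalExtensionality.
Open Scope R_scope.

Lemma sumR_ext m F G : (forall s, (s < m)%nat -> F s = G s) -> sumR m F = sumR m G.
Proof. induction m; simpl; intros H; auto. rewrite IHm, H; auto; intros; apply H; lia. Qed.

Lemma sumR_plus m F G : sumR m (fun s => F s + G s) = sumR m F + sumR m G.
Proof. induction m; simpl; [ring| rewrite IHm; ring]. Qed.
Lemma sumR_minus m F G : sumR m (fun s => F s - G s) = sumR m F - sumR m G.
Proof. induction m; simpl; [ring| rewrite IHm; ring]. Qed.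
Lemma sumR_scal m c F : sumR m (fun s => c * F s) = c * sumR m F.
Proof. induction m; simpl; [ring| rewrite IHm; ring]. Qed.
Lemma sumR_zero m : sumR m (fun _ => 0) = 0.
Proof. induction m; simpl; [ring| rewrite IHm; ring]. Qed.
Lemma sumR_le m F G : (forall s, (s < m)%nat -> F s <= G s) -> sumR m F <= sumR m G.
Proof. induction m; simpl; intros H; [lra|]. assert (F m <= G m) by (apply H; lia).
  assert (sumR m F <= sumR m G) by (apply IHm; intros; apply H; lia). lra. Qed.
Lemma sumR_nonneg m F : (forall s, (s < m)%nat -> 0 <= F s) -> 0 <= sumR m F.
Proof. intros H. rewrite <- (sumR_zero m). apply sumR_le; auto. Qed.
Lemma sumR_term m F u : (forall s, (s < m)%nat -> 0 <= F s) -> (u < m)%nat -> F u <= sumR m F.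
Proof. induction m; simpl; intros H Hu; [lia|].
  assert (0 <= sumR m F) by (apply sumR_nonneg; intros; apply H; lia).
  destruct (Nat.eq_dec u m). subst; lra.
  assert (F u <= sumR m F) by (apply IHm; [intros; apply H; lia| lia]).
  assert (0 <= F m) by (apply H; lia). lra. Qed.
Lemma sumR_pos m F u : (forall s, (s < m)%nat -> 0 <= F s) -> (u < m)%nat -> 0 < F u -> 0 < sumR m F.
Proof. intros H Hu Hp. pose proof (sumR_term m F u H Hu). lra. Qed.
Lemma sumR_mult_r m F x : sumR m F * x = sumR m (fun i => F i * x).
Proof. induction m; simpl; [ring| rewrite <- IHm; ring]. Qed.
Lemma sumR_swap m p (F : nat -> nat -> R) :
  sumR m (fun i => sumR p (fun c => F i c)) = sumR p (fun c => sumR m (fun i => F i c)).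
Proof. induction m; simpl. rewrite sumR_zero; auto.
  rewrite IHm, <- sumR_plus. reflexivity. Qed.

Definition ind (u s : nat) : R := if Nat.eqb s u then 1 else 0.
Lemma sumR_ind m F u : (u < m)%nat -> sumR m (fun s => F s * ind u s) = F u.
Proof. induction m; simpl; intros Hu; [lia|]. unfold ind at 2.
  destruct (Nat.eqb_spec m u).
  - subst. rewrite (sumR_ext _ _ (fun _ => 0)). rewrite sumR_zero; ring.
    intros s Hs; unfold ind; destruct (Nat.eqb_spec s u); [lia| ring].
  - rewrite IHm; [ring| lia]. Qed.
Lemma sumR_mul0 m F : sumR m (fun s => F s * 0) = 0.
Proof. rewrite (sumR_ext _ _ (fun _ => 0)). apply sumR_zero. intros; ring. Qed.
Definition tadd (th : theta) (t : R) (D : theta) : theta :=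
  Theta (fun s => al th s + t * al D s) (fun s => als th s + t * als D s)
        (fun s => ga th s + t * ga D s) (fun s => mu th s + t * mu D s).

Lemma sumR_lin m F a t b : sumR m (fun s => F s * (a s + t * b s)) =
  sumR m (fun s => F s * a s) + t * sumR m (fun s => F s * b s).
Proof. rewrite <- sumR_scal, <- sumR_plus. apply sumR_ext; intros; ring. Qed.

Lemma wvec_tadd P th t D c : wvec P (tadd th t D) c = wvec P th c + t * wvec P D c.
Proof. unfold wvec, tadd; simpl. rewrite !sumR_lin. ring. Qed.

Definition linp (P : prob) (th : theta) : R :=
  sumR (pn P) (fun i => py P i * (al th i - als th i)) +
  sumR (pk1 P) (fun s => pb P s * ga th s) - sumR (pk2 P) (fun s => pd P s * mu th s).
Definition fobj (P : prob) (th : theta) : R :=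
  / 2 * sumR (pp P) (fun c => wvec P th c * wvec P th c) + linp P th.

Lemma linp_tadd P th t D : linp P (tadd th t D) = linp P th + t * linp P D.
Proof. unfold linp, tadd; simpl. rewrite !sumR_lin.
  rewrite (sumR_ext (pn P) (fun i => py P i * (al th i + t * al D i - (als th i + t * als D i)))
    (fun i => py P i * ((al th i - als th i) + t * (al D i - als D i)))).
  rewrite sumR_lin. ring. intros; ring. Qed.

Lemma fobj_tadd P th t D : fobj P (tadd th t D) = fobj P th +
  t * (sumR (pp P) (fun c => wvec P th c * wvec P D c) + linp P D) +
  / 2 * (t * t) * sumR (pp P) (fun c => wvec P D c * wvec P D c).
Proof. unfold fobj. rewrite linp_tadd.
  rewrite (sumR_ext _ _ (fun c => wvec P th c * wvec P th c +
     t * (2 * (wvec P th c * wvec P D c) + t * (wvec P D c * wvec P D c)))).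
  2:{ intros; rewrite wvec_tadd; ring. }
  rewrite sumR_plus, sumR_scal, sumR_plus, sumR_scal, sumR_scal. field. Qed.
Definition Dal (i j : nat) : theta := Theta (fun s => ind i s - ind j s) (fun _ => 0) (fun _ => 0) (fun _ => 0).
Definition Dals (i j : nat) : theta := Theta (fun _ => 0) (fun s => ind i s - ind j s) (fun _ => 0) (fun _ => 0).
Definition Dga (u : nat) : theta := Theta (fun _ => 0) (fun _ => 0) (fun s => ind u s) (fun _ => 0).
Definition Dmu (u : nat) : theta := Theta (fun _ => 0) (fun _ => 0) (fun _ => 0) (fun s => ind u s).

Lemma sumR_ind2 m F i j : (i < m)%nat -> (j < m)%nat ->
  sumR m (fun s => F s * (ind i s - ind j s)) = F i - F j.
Proof. intros. rewrite (sumR_ext _ _ (fun s => F s * ind i s - F s * ind j s)).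
  rewrite sumR_minus, !sumR_ind; auto. intros; ring. Qed.

Lemma wvec_Dal P i j c : (i < pn P)%nat -> (j < pn P)%nat ->
  wvec P (Dal i j) c = pX P i c - pX P j c.
Proof. intros. unfold wvec, Dal; simpl. rewrite sumR_ind2 by auto. rewrite !sumR_mul0. ring. Qed.
Lemma wvec_Dals P i j c : (i < pn P)%nat -> (j < pn P)%nat ->
  wvec P (Dals i j) c = - (pX P i c - pX P j c).
Proof. intros. unfold wvec, Dals; simpl. rewrite sumR_ind2 by auto. rewrite !sumR_mul0. ring. Qed.
Lemma wvec_Dga P u c : (u < pk1 P)%nat -> wvec P (Dga u) c = pA P u c.
Proof. intros. unfold wvec, Dga; simpl. rewrite sumR_ind by auto. rewrite !sumR_mul0. ring. Qed.
Lemma wvec_Dmu P u c : (u < pk2 P)%nat -> wvec P (Dmu u) c = - pG P u c.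
Proof. intros. unfold wvec, Dmu; simpl. rewrite sumR_ind by auto. rewrite !sumR_mul0. ring. Qed.

Lemma curv_al P i j : sumR (pp P) (fun c => (pX P i c - pX P j c) * (pX P i c - pX P j c)) =
  Qm P i i + Qm P j j - 2 * Qm P i j.
Proof. unfold Qm. rewrite <- sumR_scal, <- sumR_plus, <- sumR_minus. apply sumR_ext; intros; ring. Qed.

Lemma dir_al P th i j : (i < pn P)%nat -> (j < pn P)%nat ->
  sumR (pp P) (fun c => wvec P th c * wvec P (Dal i j) c) + linp P (Dal i j)
   = grad_al P th i - grad_al P th j /\
  sumR (pp P) (fun c => wvec P (Dal i j) c * wvec P (Dal i j) c) = Qm P i i + Qm P j j - 2 * Qm P i j.
Proof. intros. split.
  - rewrite (sumR_ext _ _ (fun c => pX P i c * wvec P th c - pX P j c * wvec P th c)).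
    2:{ intros; rewrite wvec_Dal; auto; ring. }
    unfold linp, grad_al, Dal; simpl. rewrite sumR_minus.
    rewrite (sumR_ext (pn P) _ (fun s => py P s * (ind i s - ind j s))) by (intros; ring).
    rewrite sumR_ind2, !sumR_mul0 by auto. ring.
  - rewrite <- curv_al. apply sumR_ext; intros; rewrite wvec_Dal; auto. Qed.

Lemma dir_als P th i j : (i < pn P)%nat -> (j < pn P)%nat ->
  sumR (pp P) (fun c => wvec P th c * wvec P (Dals i j) c) + linp P (Dals i j)
   = grad_als P th i - grad_als P th j /\
  sumR (pp P) (fun c => wvec P (Dals i j) c * wvec P (Dals i j) c) = Qm P i i + Qm P j j - 2 * Qm P i j.
Proof. intros. split.
  - rewrite (sumR_ext _ _ (fun c => pX P j c * wvec P th c - pX P i c * wvec P th c)).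
    2:{ intros; rewrite wvec_Dals; auto; ring. }
    unfold linp, grad_als, Dals; simpl. rewrite sumR_minus.
    rewrite (sumR_ext (pn P) _ (fun s => (- py P s) * (ind i s - ind j s))) by (intros; ring).
    rewrite sumR_ind2, !sumR_mul0 by auto. ring.
  - rewrite <- curv_al. apply sumR_ext; intros; rewrite wvec_Dals; auto; ring. Qed.

Lemma dir_ga P th u : (u < pk1 P)%nat ->
  sumR (pp P) (fun c => wvec P th c * wvec P (Dga u) c) + linp P (Dga u) = grad_ga P th u /\
  sumR (pp P) (fun c => wvec P (Dga u) c * wvec P (Dga u) c) = AAt P u u.
Proof. intros. split.
  - rewrite (sumR_ext _ _ (fun c => pA P u c * wvec P th c)).
    2:{ intros; rewrite wvec_Dga; auto; ring. }
    unfold linp, grad_ga, Dga; simpl.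
    rewrite (sumR_ext (pn P) _ (fun s => py P s * 0)) by (intros; ring).
    rewrite sumR_ind, !sumR_mul0 by auto. ring.
  - unfold AAt. apply sumR_ext; intros; rewrite wvec_Dga; auto. Qed.

Lemma dir_mu P th u : (u < pk2 P)%nat ->
  sumR (pp P) (fun c => wvec P th c * wvec P (Dmu u) c) + linp P (Dmu u) = grad_mu P th u /\
  sumR (pp P) (fun c => wvec P (Dmu u) c * wvec P (Dmu u) c) = GGt P u u.
Proof. intros. split.
  - rewrite (sumR_ext _ _ (fun c => - (pG P u c * wvec P th c))).
    2:{ intros; rewrite wvec_Dmu; auto; ring. }
    unfold linp, grad_mu, Dmu; simpl.
    rewrite (sumR_ext (pn P) _ (fun s => py P s * 0)) by (intros; ring).
    rewrite (sumR_ext (pp P) _ (fun s => (-1) * (pG P u s * wvec P th s))) by (intros; ring).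
    rewrite sumR_scal, sumR_ind, !sumR_mul0 by auto. ring.
  - unfold GGt. apply sumR_ext; intros; rewrite wvec_Dmu; auto; ring. Qed.
Lemma pair_upd_eq a i j t : i <> j -> pair_upd a i j t = fun s => a s + t * (ind i s - ind j s).
Proof. intros Hij. apply functional_extensionality; intros s. unfold pair_upd, ind.
  destruct (Nat.eqb_spec s i); destruct (Nat.eqb_spec s j); subst; try ring; try congruence. Qed.
Lemma upd1_eq a u v : upd1 a u v = fun s => a s + (v - a u) * ind u s.
Proof. apply functional_extensionality; intros s. unfold upd1, ind.
  destruct (Nat.eqb_spec s u); subst; ring. Qed.

Lemma th_al th i j t : i <> j ->
  Theta (pair_upd (al th) i j t) (als th) (ga th) (mu th) = tadd th t (Dal i j).
Proof. intros. unfold tadd, Dal; simpl. rewrite pair_upd_eq by auto. f_equal;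
  apply functional_extensionality; intros; ring. Qed.
Lemma th_als th i j t : i <> j ->
  Theta (al th) (pair_upd (als th) i j t) (ga th) (mu th) = tadd th t (Dals i j).
Proof. intros. unfold tadd, Dals; simpl. rewrite pair_upd_eq by auto. f_equal;
  apply functional_extensionality; intros; ring. Qed.
Lemma th_ga th u v :
  Theta (al th) (als th) (upd1 (ga th) u v) (mu th) = tadd th (v - ga th u) (Dga u).
Proof. unfold tadd, Dga; simpl. rewrite upd1_eq. f_equal;
  apply functional_extensionality; intros; ring. Qed.
Lemma th_mu th u v :
  Theta (al th) (als th) (ga th) (upd1 (mu th) u v) = tadd th (v - mu th u) (Dmu u).
Proof. unfold tadd, Dmu; simpl. rewrite upd1_eq. f_equal;
  apply functional_extensionality; intros; ring. Qed.

Lemma lmin_spec l m : lmin l = Some m -> In m l /\ forall x, In x l -> m <= x.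
Proof. revert m; induction l as [|a r IH]; simpl; intros m H; [discriminate|].
  destruct (lmin r) as [m'|] eqn:E.
  - inversion H; subst. destruct (IH m' eq_refl) as [H1 H2].
    split. unfold Rmin; destruct (Rle_dec a m'); auto.
    intros x [<-|Hx]. apply Rmin_l. pose proof (H2 x Hx). pose proof (Rmin_r a m'). lra.
  - inversion H; subst. assert (r = nil) by (destruct r as [|z r']; simpl in E; auto;
      destruct (lmin r'); discriminate). subst. split; auto. intros x [<-|[]]; lra. Qed.
Lemma lmax_spec l m : lmax l = Some m -> In m l /\ forall x, In x l -> x <= m.
Proof. revert m; induction l as [|a r IH]; simpl; intros m H; [discriminate|].
  destruct (lmax r) as [m'|] eqn:E.
  - inversion H; subst. destruct (IH m' eq_refl) as [H1 H2].
    split. unfold Rmax; destruct (Rle_dec a m'); auto.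
    intros x [<-|Hx]. apply Rmax_l. pose proof (H2 x Hx). pose proof (Rmax_r a m'). lra.
  - inversion H; subst. assert (r = nil) by (destruct r as [|z r']; simpl in E; auto;
      destruct (lmax r'); discriminate). subst. split; auto. intros x [<-|[]]; lra. Qed.
Lemma lmin_some l x : In x l -> exists m, lmin l = Some m.
Proof. destruct l; simpl; [intros []|]. destruct (lmin l); eauto. Qed.
Lemma lmax_some l x : In x l -> exists m, lmax l = Some m.
Proof. destruct l; simpl; [intros []|]. destruct (lmax l); eauto. Qed.

Lemma Rltb_true x y : Rltb x y = true <-> x < y.
Proof. unfold Rltb; destruct (Rlt_dec x y); split; intros; auto; try discriminate; lra. Qed.
Lemma in_up P a i : In i (I_up P a) <-> (i < pn P)%nat /\ a i < Cn P.
Proof. unfold I_up. rewrite filter_In, in_seq, Rltb_true. split; intros [H1 H2]; split; auto; lia. Qed.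
Lemma in_low P a i : In i (I_low P a) <-> (i < pn P)%nat /\ 0 < a i.
Proof. unfold I_low. rewrite filter_In, in_seq, Rltb_true. split; intros [H1 H2]; split; auto; lia. Qed.

Lemma lmin_arg (l : list nat) g i : In i l -> (forall x, In x l -> g i <= g x) ->
  lmin (map g l) = Some (g i).
Proof. intros Hi Hm. destruct (lmin_some (map g l) (g i)) as [m Hm'].
  apply in_map; auto. rewrite Hm'. destruct (lmin_spec _ _ Hm') as [H1 H2].
  apply in_map_iff in H1. destruct H1 as [x [<- Hx]]. f_equal.
  pose proof (Hm x Hx). pose proof (H2 (g i) (in_map g l i Hi)). lra. Qed.
Lemma lmax_arg (l : list nat) g i : In i l -> (forall x, In x l -> g x <= g i) ->
  lmax (map g l) = Some (g i).
Proof. intros Hi Hm. destruct (lmax_some (map g l) (g i)) as [m Hm'].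
  apply in_map; auto. rewrite Hm'. destruct (lmax_spec _ _ Hm') as [H1 H2].
  apply in_map_iff in H1. destruct H1 as [x [<- Hx]]. f_equal.
  pose proof (Hm x Hx). pose proof (H2 (g i) (in_map g l i Hi)). lra. Qed.

Lemma Dpair_val P a g i j : is_argmin_up P a g i -> is_argmax_low P a g j ->
  0 < Delta_pair P a g -> Delta_pair P a g = g j - g i.
Proof. intros [Hi1 [Hi2 Hi3]] [Hj1 [Hj2 Hj3]]. unfold Delta_pair.
  rewrite (lmin_arg _ g i), (lmax_arg _ g j).
  - unfold Rmax; destruct (Rle_dec (g j - g i) 0); intros; lra.
  - apply in_low; auto.
  - intros x Hx; apply in_low in Hx; destruct Hx; auto.
  - apply in_up; auto.
  - intros x Hx; apply in_up in Hx; destruct Hx; auto. Qed.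

Lemma D3_val P th u : (u < pk1 P)%nat ->
  (forall s, (s < pk1 P)%nat -> grad_ga P th u <= grad_ga P th s) ->
  0 < Delta3 P th -> Delta3 P th = - grad_ga P th u.
Proof. intros Hu Hm. unfold Delta3. rewrite (lmin_arg _ _ u).
  - unfold Rmax; destruct (Rle_dec (- grad_ga P th u) 0); intros; lra.
  - apply in_seq; lia.
  - intros x Hx; apply in_seq in Hx; apply Hm; lia. Qed.
Lemma D4_val P th u : (u < pk2 P)%nat ->
  (forall s, (s < pk2 P)%nat -> Rabs (grad_mu P th s) <= Rabs (grad_mu P th u)) ->
  Delta4 P th = Rabs (grad_mu P th u).
Proof. intros Hu Hm. unfold Delta4. rewrite (lmax_arg _ (fun s => Rabs (grad_mu P th s)) u); auto.
  - apply in_seq; lia.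
  - intros x Hx; apply in_seq in Hx; apply Hm; lia. Qed.

Lemma D1_nn P th : 0 <= Delta1 P th.
Proof. unfold Delta1, Delta_pair. repeat match goal with |- context [lmin ?l] => destruct (lmin l) | |- context [lmax ?l] => destruct (lmax l) end; try apply Rmax_r; lra. Qed.
Lemma D2_nn P th : 0 <= Delta2 P th.
Proof. unfold Delta2, Delta_pair. repeat match goal with |- context [lmin ?l] => destruct (lmin l) | |- context [lmax ?l] => destruct (lmax l) end; try apply Rmax_r; lra. Qed.
Lemma D3_nn P th : 0 <= Delta3 P th.
Proof. unfold Delta3. destruct lmin; try lra. apply Rmax_r. Qed.
Lemma D4_nn P th : 0 <= Delta4 P th.
Proof. unfold Delta4. destruct lmax eqn:E; try lra. apply lmax_spec in E. destruct E as [E _].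
  apply in_map_iff in E. destruct E as [x [<- _]]. apply Rabs_pos. Qed.
Lemma DK_ge P th : Delta1 P th <= DeltaK P th /\ Delta2 P th <= DeltaK P th /\
  Delta3 P th <= DeltaK P th /\ Delta4 P th <= DeltaK P th.
Proof. unfold DeltaK. pose proof (Rmax_l (Delta1 P th) (Delta2 P th)).
  pose proof (Rmax_r (Delta1 P th) (Delta2 P th)).
  pose proof (Rmax_l (Delta3 P th) (Delta4 P th)).
  pose proof (Rmax_r (Delta3 P th) (Delta4 P th)).
  pose proof (Rmax_l (Rmax (Delta1 P th) (Delta2 P th)) (Rmax (Delta3 P th) (Delta4 P th))).
  pose proof (Rmax_r (Rmax (Delta1 P th) (Delta2 P th)) (Rmax (Delta3 P th) (Delta4 P th))).
  repeat split; lra. Qed.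
Lemma quad_clamp q G lo hi t : 0 < q -> lo <= 0 -> 0 <= hi ->
  t = Rmin (Rmax lo (- G / q)) hi -> t * G + / 2 * (t * t) * q <= 0.
Proof. intros Hq Hlo Hhi Ht.
  assert (HG : G = - q * (- G / q)) by (field; lra).
  revert Ht HG. generalize (- G / q). intros tq Ht HG.
  rewrite HG.
  assert (Hb : (0 <= t <= tq) \/ (tq <= t <= 0)).
  { subst t. unfold Rmax, Rmin; repeat destruct Rle_dec; lra. }
  assert (t * (t - 2 * tq) <= 0) by (clear -Hb; destruct Hb as [[H1 H2]|[H1 H2]];
    [assert (0 <= t * (tq - t)) by (apply Rmult_le_pos; lra); assert (0 <= t * tq) by (apply Rmult_le_pos; lra)
    |assert (0 <= (- t) * (t - tq)) by (apply Rmult_le_pos; lra); assert (0 <= (-t) * (-tq)) by (apply Rmult_le_pos; lra)]; nra).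
  replace (t * (- q * tq) + / 2 * (t * t) * q) with (/2 * q * (t * (t - 2 * tq))) by field.
  assert (0 < /2 * q) by lra. nra. Qed.

Lemma quad_exact f f' t G q B D : f' = f + t * G + / 2 * (t * t) * q -> t = - G / q ->
  0 < q -> q <= B -> D * D = G * G -> D * D / (2 * B) <= f - f'.
Proof. intros Hf Ht Hq HB HD.
  assert (E : f - f' = G * G / (2 * q)) by (subst f' t; field; lra).
  rewrite E, HD.
  unfold Rdiv. apply Rmult_le_compat_l. nra.
  apply Rinv_le_contravar; lra. Qed.

Lemma pair_block P a g i j f f' B D :
  (forall s, (s < pn P)%nat -> 0 <= a s <= Cn P) ->
  is_argmin_up P a g i -> is_argmax_low P a g j -> 0 < D -> Delta_pair P a g = D ->
  (i <> j -> 0 < Qm P i i + Qm P j j - 2 * Qm P i j <= B) ->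
  (i <> j -> f' = f + tstar P a g i j * (g i - g j) +
      / 2 * (tstar P a g i j * tstar P a g i j) * (Qm P i i + Qm P j j - 2 * Qm P i j)) ->
  i <> j /\ (forall s, (s < pn P)%nat -> 0 <= pair_upd a i j (tstar P a g i j) s <= Cn P) /\
  f' <= f /\ (tstar P a g i j = tq P g i j -> D * D / (2 * B) <= f - f').
Proof. intros Ha Hi Hj HD HDe Hq Hf.
  assert (HDv : D = g j - g i) by (rewrite <- HDe; apply Dpair_val; auto; lra).
  assert (Hij : i <> j) by (intro; subst; lra).
  specialize (Hq Hij). specialize (Hf Hij).
  destruct Hi as [Hi1 [Hi2 _]]. destruct Hj as [Hj1 [Hj2 _]].
  pose proof (Ha i Hi1). pose proof (Ha j Hj1).
  set (q := Qm P i i + Qm P j j - 2 * Qm P i j) in *.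
  set (t := tstar P a g i j) in *.
  assert (Ht : Rmax (- a i) (a j - Cn P) <= t <= Rmin (a j) (Cn P - a i)).
  { unfold t, tstar. unfold Rmax, Rmin; repeat destruct Rle_dec; lra. }
  split; [auto|]. split; [intros s0 Hs; split|split].
  - unfold pair_upd. pose proof (Ha s0 Hs).
    revert Ht; unfold Rmax, Rmin; repeat destruct Rle_dec;
    destruct (Nat.eqb_spec s0 i); destruct (Nat.eqb_spec s0 j); subst; intros; lra.
  - unfold pair_upd. pose proof (Ha s0 Hs).
    revert Ht; unfold Rmax, Rmin; repeat destruct Rle_dec;
    destruct (Nat.eqb_spec s0 i); destruct (Nat.eqb_spec s0 j); subst; intros; lra.
  - pose proof (quad_clamp q (g i - g j) (Rmax (- a i) (a j - Cn P)) (Rmin (a j) (Cn P - a i)) t).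
    assert (Rmax (- a i) (a j - Cn P) <= 0) by (unfold Rmax; destruct Rle_dec; lra).
    assert (0 <= Rmin (a j) (Cn P - a i)) by (unfold Rmin; destruct Rle_dec; lra).
    specialize (H1 ltac:(lra) H2 H3 eq_refl). lra.
  - intros Htq. apply (quad_exact f f' t (g i - g j) q B D);
    [exact Hf | transitivity (tq P g i j); [exact Htq| reflexivity] | lra | lra | rewrite HDv; ring]. Qed.
Lemma quad_between q G t : 0 < q -> (0 <= t <= - G / q \/ - G / q <= t <= 0) ->
  t * G + / 2 * (t * t) * q <= 0.
Proof. intros Hq Hb.
  assert (HG : G = - q * (- G / q)) by (field; lra).
  revert Hb HG. generalize (- G / q). intros tq Hb HG.
  rewrite HG.
  assert (t * (t - 2 * tq) <= 0) by (clear -Hb; destruct Hb as [[H1 H2]|[H1 H2]];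
    [assert (0 <= t * (tq - t)) by (apply Rmult_le_pos; lra); assert (0 <= t * tq) by (apply Rmult_le_pos; lra)
    |assert (0 <= (- t) * (t - tq)) by (apply Rmult_le_pos; lra); assert (0 <= (-t) * (-tq)) by (apply Rmult_le_pos; lra)]; nra).
  replace (t * (- q * tq) + / 2 * (t * t) * q) with (/2 * q * (t * (t - 2 * tq))) by field.
  assert (0 < /2 * q) by lra. nra. Qed.

Definition Inv (P : prob) (th : theta) : Prop :=
  (forall i, (i < pn P)%nat -> 0 <= al th i <= Cn P /\ 0 <= als th i <= Cn P) /\
  (forall s, (s < pk1 P)%nat -> 0 <= ga th s).

Definition Bnd (P : prob) : R :=
  sumR (pn P) (fun i => sumR (pn P) (fun j => Qm P i i + Qm P j j - 2 * Qm P i j)) +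
  sumR (pk1 P) (fun u => AAt P u u) + sumR (pk2 P) (fun u => GGt P u u) + 1.

Lemma sq_nn m F : 0 <= sumR m (fun c => F c * F c).
Proof. apply sumR_nonneg; intros; nra. Qed.
Lemma q_nn P i j : 0 <= Qm P i i + Qm P j j - 2 * Qm P i j.
Proof. rewrite <- curv_al. apply sq_nn. Qed.
Lemma AA_nn P u : 0 <= AAt P u u.
Proof. apply sq_nn. Qed.
Lemma GG_nn P u : 0 <= GGt P u u.
Proof. apply sq_nn. Qed.

Lemma Bnd_parts P : 0 <= sumR (pn P) (fun i => sumR (pn P) (fun j => Qm P i i + Qm P j j - 2 * Qm P i j))
  /\ 0 <= sumR (pk1 P) (fun u => AAt P u u) /\ 0 <= sumR (pk2 P) (fun u => GGt P u u).
Proof. split; [|split]; apply sumR_nonneg; intros.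
  apply sumR_nonneg; intros; apply q_nn. apply AA_nn. apply GG_nn. Qed.

Lemma Bnd_al P i j : (i < pn P)%nat -> (j < pn P)%nat -> Qm P i i + Qm P j j - 2 * Qm P i j <= Bnd P.
Proof. intros. pose proof (Bnd_parts P). unfold Bnd.
  assert (Qm P i i + Qm P j j - 2 * Qm P i j <= sumR (pn P) (fun j => Qm P i i + Qm P j j - 2 * Qm P i j)).
  { apply (sumR_term _ (fun j => Qm P i i + Qm P j j - 2 * Qm P i j)); auto. intros; apply q_nn. }
  assert (sumR (pn P) (fun j => Qm P i i + Qm P j j - 2 * Qm P i j) <=
     sumR (pn P) (fun i => sumR (pn P) (fun j => Qm P i i + Qm P j j - 2 * Qm P i j))).
  { apply (sumR_term _ (fun i => sumR (pn P) (fun j => Qm P i i + Qm P j j - 2 * Qm P i j))); auto.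
    intros; apply sumR_nonneg; intros; apply q_nn. }
  lra. Qed.
Lemma Bnd_ga P u : (u < pk1 P)%nat -> AAt P u u <= Bnd P.
Proof. intros. pose proof (Bnd_parts P). unfold Bnd.
  assert (AAt P u u <= sumR (pk1 P) (fun u => AAt P u u)).
  { apply (sumR_term _ (fun u => AAt P u u)); auto. intros; apply AA_nn. } lra. Qed.
Lemma Bnd_mu P u : (u < pk2 P)%nat -> GGt P u u <= Bnd P.
Proof. intros. pose proof (Bnd_parts P). unfold Bnd.
  assert (GGt P u u <= sumR (pk2 P) (fun u => GGt P u u)).
  { apply (sumR_term _ (fun u => GGt P u u)); auto. intros; apply GG_nn. } lra. Qed.
Lemma Bnd_pos P : 0 < Bnd P.
Proof. pose proof (Bnd_parts P). unfold Bnd. lra. Qed.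

Lemma sq_pos m F c : (c < m)%nat -> F c <> 0 -> 0 < sumR m (fun c => F c * F c).
Proof. intros. apply (sumR_pos _ _ c); auto. intros; nra.
  assert (F c < 0 \/ 0 < F c) by (destruct (Rtotal_order (F c) 0) as [|[|]]; auto; congruence). nra. Qed.
Section Step.
Variable P : prob.
Hypothesis Hd : forall i j, (i < pn P)%nat -> (j < pn P)%nat -> i <> j ->
     exists c, (c < pp P)%nat /\ pX P i c <> pX P j c.
Hypothesis HA : forall s, (s < pk1 P)%nat -> exists c, (c < pp P)%nat /\ pA P s c <> 0.
Hypothesis HG : forall s, (s < pk2 P)%nat -> exists c, (c < pp P)%nat /\ pG P s c <> 0.

Lemma q_pos i j : (i < pn P)%nat -> (j < pn P)%nat -> i <> j ->
  0 < Qm P i i + Qm P j j - 2 * Qm P i j <= Bnd P.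
Proof. intros. split; [|apply Bnd_al; auto]. rewrite <- curv_al.
  destruct (Hd i j) as [c [Hc Hne]]; auto.
  apply (sq_pos _ (fun c => pX P i c - pX P j c) c); auto. intro; apply Hne; lra. Qed.

Lemma step th th' cl : Inv P th -> smo_iter P 0 th th' cl ->
  Inv P th' /\ fobj P th' <= fobj P th /\
  (cl = false -> DeltaK P th * DeltaK P th / (2 * Bnd P) <= fobj P th - fobj P th').
Proof. intros [Hab Hga] [Hpos Hb].
  destruct Hb as [[HD1 [i [j [Hi [Hj [Heq Hcl]]]]]] |
                 [[_ [HD2 [i [j [Hi [Hj [Heq Hcl]]]]]]] |
                 [[_ [_ [HD3 [u [Hu [Hmin [Heq Hcl]]]]]]] |
                  [_ [_ [_ [HD4 [u [Hu [Hmax [Heq Hcl]]]]]]]]]]].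
  - destruct (pair_block P (al th) (grad_al P th) i j (fobj P th) (fobj P th') (Bnd P) (DeltaK P th))
      as [Hij [Hbox [Hdec Hunc]]]; auto.
    + intros s Hs; apply Hab; auto.
    + intros; destruct Hi, Hj; apply q_pos; auto.
    + intros Hij. destruct Hi as [Hi1 _], Hj as [Hj1 _].
      rewrite Heq, th_al, fobj_tadd by auto. destruct (dir_al P th i j Hi1 Hj1) as [E1 E2].
      rewrite E1, E2. ring.
    + split; [|split; auto].
      * rewrite Heq. split; simpl; intros; [split; [apply Hbox | apply Hab] | apply Hga]; auto.
      * intros Hc. apply Hunc. destruct (Req_dec (tstar P (al th) (grad_al P th) i j)
           (tq P (grad_al P th) i j)); auto. apply Hcl in H. congruence.
  - destruct (pair_block P (als th) (grad_als P th) i j (fobj P th) (fobj P th') (Bnd P) (DeltaK P th))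
      as [Hij [Hbox [Hdec Hunc]]]; auto.
    + intros s Hs; apply Hab; auto.
    + intros; destruct Hi, Hj; apply q_pos; auto.
    + intros Hij. destruct Hi as [Hi1 _], Hj as [Hj1 _].
      rewrite Heq, th_als, fobj_tadd by auto. destruct (dir_als P th i j Hi1 Hj1) as [E1 E2].
      rewrite E1, E2. ring.
    + split; [|split; auto].
      * rewrite Heq. split; simpl; intros; [split; [apply Hab | apply Hbox] | apply Hga]; auto.
      * intros Hc. apply Hunc. destruct (Req_dec (tstar P (als th) (grad_als P th) i j)
           (tq P (grad_als P th) i j)); auto. apply Hcl in H. congruence.
  - set (g := grad_ga P th u) in *. set (a := AAt P u u) in *.
    assert (Ha : 0 < a <= Bnd P).
    { split; [|apply Bnd_ga; auto]. destruct (HA u Hu) as [c [Hc Hne]].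
      apply (sq_pos _ (fun c => pA P u c) c); auto. }
    set (v := Rmax (ga th u - g / a) 0) in *.
    assert (Hf : fobj P th' = fobj P th + (v - ga th u) * g + / 2 * ((v - ga th u) * (v - ga th u)) * a).
    { rewrite Heq, th_ga, fobj_tadd. destruct (dir_ga P th u Hu) as [E1 E2].
      rewrite E1, E2. reflexivity. }
    pose proof (Hga u Hu).
    assert (Hgg : g = - a * (- g / a)) by (field; lra).
    split; [|split].
    + rewrite Heq. split; simpl; intros; auto. unfold upd1.
      destruct (Nat.eqb_spec s u); [apply Rmax_r| apply Hga; auto].
    + assert ((v - ga th u) * g + / 2 * ((v - ga th u) * (v - ga th u)) * a <= 0); [|lra].
      apply quad_between; [lra|]. unfold v, Rmax. destruct Rle_dec.
      * right. split; [|lra]. assert (g / a = - (- g / a)) by (field; lra). lra.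
      * assert (g / a = - (- g / a)) by (field; lra).
        destruct (Rle_dec 0 (- g / a)); [left|right]; lra.
    + intros Hc. assert (Hnc : ~ (ga th u - g / a < 0)) by (intro H'; apply Hcl in H'; congruence).
      assert (Hv : v = ga th u - g / a) by (unfold v, Rmax; destruct Rle_dec; lra).
      apply (quad_exact (fobj P th) (fobj P th') (v - ga th u) g a (Bnd P) (DeltaK P th));
        [exact Hf | rewrite Hv; field; lra | lra | lra | ].
      rewrite <- HD3, (D3_val P th u) by (auto; lra). fold g. ring.
  - set (g := grad_mu P th u) in *. set (a := GGt P u u) in *.
    assert (Ha : 0 < a <= Bnd P).
    { split; [|apply Bnd_mu; auto]. destruct (HG u Hu) as [c [Hc Hne]].
      apply (sq_pos _ (fun c => pG P u c) c); auto. }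
    set (v := mu th u - g / a) in *.
    assert (Hf : fobj P th' = fobj P th + (v - mu th u) * g + / 2 * ((v - mu th u) * (v - mu th u)) * a).
    { rewrite Heq, th_mu, fobj_tadd. destruct (dir_mu P th u Hu) as [E1 E2].
      rewrite E1, E2. reflexivity. }
    assert (Hgg : g = - a * (- g / a)) by (field; lra).
    split; [|split].
    + rewrite Heq. split; simpl; intros; auto.
    + assert ((v - mu th u) * g + / 2 * ((v - mu th u) * (v - mu th u)) * a <= 0); [|lra].
      apply quad_between; [lra|]. unfold v.
      assert (g / a = - (- g / a)) by (field; lra).
      destruct (Rle_dec 0 (- g / a)); [left|right]; lra.
    + intros Hc. apply (quad_exact (fobj P th) (fobj P th') (v - mu th u) g a (Bnd P) (DeltaK P th));
        [exact Hf | unfold v; field; lra | lra | lra | ].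
      rewrite <- HD4, (D4_val P th u) by auto. fold g. unfold Rabs; destruct Rcase_abs; ring.
Qed.
End Step.
Lemma key_swap m p (F : nat -> nat -> R) a b :
  sumR p (fun c => sumR m (fun i => F i c * a i) * b c) =
  sumR m (fun i => a i * sumR p (fun c => F i c * b c)).
Proof. rewrite (sumR_ext p _ (fun c => sumR m (fun i => F i c * a i * b c))).
  2:{ intros; apply sumR_mult_r. }
  rewrite <- sumR_swap. apply sumR_ext; intros. rewrite <- sumR_scal. apply sumR_ext; intros; ring. Qed.

Section LB.
Variable P : prob.
Variable beta : nat -> R.
Hypothesis Hb1 : forall s, (s < pk1 P)%nat -> sumR (pp P) (fun c => pA P s c * beta c) <= pb P s.
Hypothesis Hb2 : forall s, (s < pk2 P)%nat -> sumR (pp P) (fun c => pG P s c * beta c) = pd P s.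

Definition Xb i := sumR (pp P) (fun c => pX P i c * beta c).
Definition Lb : R := - / 2 * sumR (pp P) (fun c => beta c * beta c)
   - sumR (pn P) (fun i => Cn P * Rabs (py P i - Xb i)).

Lemma wb th : sumR (pp P) (fun c => wvec P th c * beta c) =
  sumR (pn P) (fun i => al th i * Xb i) - sumR (pn P) (fun i => als th i * Xb i)
  + sumR (pk1 P) (fun s => ga th s * sumR (pp P) (fun c => pA P s c * beta c))
  - sumR (pk2 P) (fun s => mu th s * sumR (pp P) (fun c => pG P s c * beta c)).
Proof. unfold wvec.
  rewrite (sumR_ext _ _ (fun c =>
     sumR (pn P) (fun i => pX P i c * al th i) * beta c
   - sumR (pn P) (fun i => pX P i c * als th i) * beta c
   + sumR (pk1 P) (fun s => pA P s c * ga th s) * beta c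
   - sumR (pk2 P) (fun s => pG P s c * mu th s) * beta c)) by (intros; ring).
  rewrite !sumR_minus, sumR_plus, sumR_minus, !key_swap. reflexivity. Qed.

Lemma fobj_lb th : Inv P th -> Lb <= fobj P th.
Proof. intros [Hab Hga]. unfold fobj, Lb.
  assert (H1 : sumR (pk2 P) (fun s => pd P s * mu th s) =
     sumR (pk2 P) (fun s => mu th s * sumR (pp P) (fun c => pG P s c * beta c))).
  { apply sumR_ext; intros; rewrite Hb2; auto; ring. }
  assert (H2 : sumR (pk1 P) (fun s => ga th s * sumR (pp P) (fun c => pA P s c * beta c)) <=
     sumR (pk1 P) (fun s => pb P s * ga th s)).
  { apply sumR_le; intros. pose proof (Hga s H). pose proof (Hb1 s H). nra. }
  assert (H3 : sumR (pn P) (fun i => py P i * (al th i - als th i)) =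
     sumR (pn P) (fun i => al th i * Xb i) - sumR (pn P) (fun i => als th i * Xb i) +
     sumR (pn P) (fun i => (al th i - als th i) * (py P i - Xb i))).
  { rewrite <- sumR_minus, <- sumR_plus. apply sumR_ext; intros; ring. }
  assert (H4 : - sumR (pn P) (fun i => Cn P * Rabs (py P i - Xb i)) <=
     sumR (pn P) (fun i => (al th i - als th i) * (py P i - Xb i))).
  { rewrite <- (Rmult_1_l (sumR _ _)), Ropp_mult_distr_l, <- sumR_scal.
    apply sumR_le; intros. destruct (Hab s H) as [[Ha1 Ha2] [Hs1 Hs2]].
    set (r := py P s - Xb s). clearbody r. unfold Rabs; destruct Rcase_abs.
    - assert (0 <= (Cn P - (al th s - als th s)) * (- r)) by (apply Rmult_le_pos; lra).
      assert ((al th s - als th s) * r - (- (1) * (Cn P * - r)) = (Cn P - (al th s - als th s)) * (- r)) by ring. lra.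
    - assert (0 <= (Cn P + (al th s - als th s)) * r) by (apply Rmult_le_pos; lra).
      assert ((al th s - als th s) * r - (- (1) * (Cn P * r)) = (Cn P + (al th s - als th s)) * r) by ring. lra. }
  assert (H5 : - / 2 * sumR (pp P) (fun c => beta c * beta c) <=
     / 2 * sumR (pp P) (fun c => wvec P th c * wvec P th c) + sumR (pp P) (fun c => wvec P th c * beta c)).
  { rewrite <- !sumR_scal, <- sumR_plus. apply sumR_le; intros.
    pose proof (Rle_0_sqr (wvec P th s + beta s)). unfold Rsqr in *. lra. }
  rewrite wb in H5. unfold linp. lra. Qed.
End LB.
Lemma conv_sub K (u v : nat -> R) : conv0_along K u -> (forall k, 0 <= v k <= u k) -> conv0_along K v.
Proof. intros H Hv eps Heps. destruct (H eps Heps) as [N HN]. exists N. intros k Hk HK.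
  specialize (HN k Hk HK). destruct (Hv k). rewrite Rabs_right by lra.
  rewrite Rabs_right in HN by lra. lra. Qed.

Theorem lemmaD4 (P : prob) (th : nat -> theta) (cl : nat -> bool) (K : nat -> Prop) :
  (1 <= pn P)%nat -> (1 <= pp P)%nat -> (1 <= pk1 P)%nat -> (1 <= pk2 P)%nat ->
  0 < pC P -> 0 < pnu P <= 1 ->
  (* rows of X pairwise distinct *)
  (forall i j, (i < pn P)%nat -> (j < pn P)%nat -> i <> j ->
     exists c, (c < pp P)%nat /\ pX P i c <> pX P j c) ->
  (* no row of A or Gamma is zero *)
  (forall s, (s < pk1 P)%nat -> exists c, (c < pp P)%nat /\ pA P s c <> 0) ->
  (forall s, (s < pk2 P)%nat -> exists c, (c < pp P)%nat /\ pG P s c <> 0) ->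
  (* {beta : A beta <= b, Gamma beta = d} is nonempty *)
  (exists beta : nat -> R,
     (forall s, (s < pk1 P)%nat -> sumR (pp P) (fun c => pA P s c * beta c) <= pb P s) /\
     (forall s, (s < pk2 P)%nat -> sumR (pp P) (fun c => pG P s c * beta c) = pd P s)) ->
  feasible P (th 0%nat) ->
  (* the algorithm with tau = 0 never stops; iteration k maps th k to th (k+1) *)
  (forall k, smo_iter P 0 (th k) (th (S k)) (cl k)) ->
  (* K infinite, consisting of unclipped iterations *)
  (forall N, exists k, (N <= k)%nat /\ K k) ->
  (forall k, K k -> cl k = false) ->
  conv0_along K (fun k => DeltaK P (th k)) /\
  conv0_along K (fun k => Delta1 P (th k)) /\
  conv0_along K (fun k => Delta2 P (th k)) /\
  conv0_along K (fun k => Delta3 P (th k)) /\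
  conv0_along K (fun k => Delta4 P (th k)).
Proof.
  intros _ _ _ _ _ _ Hd HA HG [beta [Hb1 Hb2]] Hfeas Hit _ HK.
  assert (Hinv : forall k, Inv P (th k)).
  { induction k.
    - destruct Hfeas as [H1 [_ [_ H4]]]. split; auto.
    - destruct (step P Hd HA HG (th k) (th (S k)) (cl k) IHk (Hit k)) as [H _]; auto. }
  assert (Hmono : forall k, fobj P (th (S k)) <= fobj P (th k)).
  { intros k. destruct (step P Hd HA HG (th k) (th (S k)) (cl k) (Hinv k) (Hit k)) as [_ [H _]]; auto. }
  assert (Hmono2 : forall N k, (N <= k)%nat -> fobj P (th k) <= fobj P (th N)).
  { intros N k Hk. induction Hk; [lra|]. pose proof (Hmono m). lra. }
  assert (Hdec : forall k, K k -> DeltaK P (th k) * DeltaK P (th k) / (2 * Bnd P) <=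
      fobj P (th k) - fobj P (th (S k))).
  { intros k Hk. destruct (step P Hd HA HG (th k) (th (S k)) (cl k) (Hinv k) (Hit k)) as [_ [_ H]]; auto. }
  assert (Hlb : forall k, Lb P beta <= fobj P (th k)).
  { intros k. apply fobj_lb; auto. }
  assert (HDnn : forall k, 0 <= DeltaK P (th k)).
  { intros k. pose proof (D1_nn P (th k)). pose proof (DK_ge P (th k)). lra. }
  assert (HB := Bnd_pos P).
  assert (Hconv : conv0_along K (fun k => DeltaK P (th k))).
  { intros eps Heps. apply NNPP; intro Hn.
    assert (Hinf : forall N, exists k, (N <= k)%nat /\ K k /\ eps <= DeltaK P (th k)).
    { intros N. apply NNPP; intro H. apply Hn. exists N. intros k Hk HKk.
      rewrite Rabs_right by (apply Rle_ge; auto).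
      destruct (Rlt_or_le (DeltaK P (th k)) eps); auto. exfalso; apply H; eauto. }
    set (c := eps * eps / (2 * Bnd P)).
    assert (Hc : 0 < c) by (unfold c; apply Rdiv_lt_0_compat; nra).
    assert (Hm : forall m, exists N, fobj P (th N) <= fobj P (th 0%nat) - INR m * c).
    { induction m.
      - exists 0%nat. simpl. lra.
      - destruct IHm as [N HN]. destruct (Hinf N) as [k [Hk [HKk He]]].
        exists (S k). rewrite S_INR.
        pose proof (Hdec k HKk). pose proof (Hmono2 N k Hk).
        assert (c <= DeltaK P (th k) * DeltaK P (th k) / (2 * Bnd P)).
        { unfold c, Rdiv. apply Rmult_le_compat_r.
          left; apply Rinv_0_lt_compat; lra. nra. }
        lra. }
    destruct (INR_unbounded ((fobj P (th 0%nat) - Lb P beta) / c)) as [m Hmu].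
    destruct (Hm m) as [N HN]. pose proof (Hlb N).
    assert (INR m * c > fobj P (th 0%nat) - Lb P beta).
    { replace (fobj P (th 0%nat) - Lb P beta) with ((fobj P (th 0%nat) - Lb P beta) / c * c)
        by (field; lra).
      apply Rmult_gt_compat_r; auto. }
    lra. }
  repeat split; auto; apply (conv_sub K _ _ Hconv); intros k; pose proof (DK_ge P (th k)).
  - pose proof (D1_nn P (th k)); lra.
  - pose proof (D2_nn P (th k)); lra.
  - pose proof (D3_nn P (th k)); lra.
  - pose proof (D4_nn P (th k)); lra.
Qed.
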